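(* There does not exist a real linear map $\phi \colon M_2 \to \mathcal H_2$ such that $\phi(\mathcal U_2) \subset \mathcal H_2 \cap \mathcal U_2$.
   Context: $M_2$ is the set of $2\times 2$ complex matrices, $\mathcal U_2$ the unitary ones, and $\mathcal H_2$ the real vector space of $2\times2$ complex hermitian matrices. *)

(* Defs.v *)
From HB Require Import structures.
From mathcomp Require Import all_boot all_order all_algebra.
From mathcomp Require Import complex reals.
Set Implicit Arguments. Unset Strict Implicit. Unset Printing Implicit Defensive.
Import Order.TTheory GRing.Theory Num.Theory.
Local Open Scope ring_scope.
Local Open Scope complex_scope.

Definition M2 (R : realType) := 'M[R[i]]_2.

Definition adjM (R : realType) (A : M2 R) : M2 R := map_mx Num.conj A^T.

Definition hermM2 (R : realType) (A : M2 R) : Prop := adjM A = A.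

Definition unitaryM2 (R : realType) (A : M2 R) : Prop := A *m adjM A = 1%:M.

Definition real_linear (R : realType) (phi : M2 R -> M2 R) : Prop :=
  (forall A B, phi (A + B) = phi A + phi B) /\
  (forall (r : R) A, phi (r%:C *: A) = r%:C *: phi A).

(* Main.v *)
Require Import Defs.
From HB Require Import structures.
From mathcomp Require Import all_boot all_order all_algebra.
From mathcomp Require Import complex reals ring lra.
Import Order.TTheory GRing.Theory Num.Theory.
Local Open Scope ring_scope.
Local Open Scope complex_scope.
Set Implicit Arguments. Unset Strict Implicit.

Lemma no4 (R : realFieldType) (a1 a2 a3 b1 b2 b3 c1 c2 c3 d1 d2 d3 : R) :
  a1*a1+a2*a2+a3*a3 = 1 -> b1*b1+b2*b2+b3*b3 = 1 -> c1*c1+c2*c2+c3*c3 = 1 ->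
  d1*d1+d2*d2+d3*d3 = 1 ->
  a1*b1+a2*b2+a3*b3 = 0 -> a1*c1+a2*c2+a3*c3 = 0 -> a1*d1+a2*d2+a3*d3 = 0 ->
  b1*c1+b2*c2+b3*c3 = 0 -> b1*d1+b2*d2+b3*d3 = 0 -> c1*d1+c2*d2+c3*d3 = 0 -> False.
Proof.
move=> aa bb cc dd ab ac ad bc bd cd.
set D := a1*(b2*c3 - b3*c2) - a2*(b1*c3-b3*c1) + a3*(b1*c2-b2*c1).
have hD : D * (d1*d1+d2*d2+d3*d3) =
  (a1*d1+a2*d2+a3*d3) * (d1*(b2*c3 - b3*c2) - d2*(b1*c3-b3*c1) + d3*(b1*c2-b2*c1))
  + (b1*d1+b2*d2+b3*d3) * (a1*(d2*c3 - d3*c2) - a2*(d1*c3-d3*c1) + a3*(d1*c2-d2*c1))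
  + (c1*d1+c2*d2+c3*d3) * (a1*(b2*d3 - b3*d2) - a2*(b1*d3-b3*d1) + a3*(b1*d2-b2*d1)).
  rewrite /D; ring.
rewrite dd ad bd cd !mul0r !addr0 mulr1 in hD.
have hG : D * D =
  (a1*a1+a2*a2+a3*a3) * ((b1*b1+b2*b2+b3*b3)*(c1*c1+c2*c2+c3*c3) - (b1*c1+b2*c2+b3*c3)^+2)
  - (a1*b1+a2*b2+a3*b3) * ((a1*b1+a2*b2+a3*b3)*(c1*c1+c2*c2+c3*c3) - (b1*c1+b2*c2+b3*c3)*(a1*c1+a2*c2+a3*c3))
  + (a1*c1+a2*c2+a3*c3) * ((a1*b1+a2*b2+a3*b3)*(b1*c1+b2*c2+b3*c3) - (b1*b1+b2*b2+b3*b3)*(a1*c1+a2*c2+a3*c3)).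
  rewrite /D; ring.
rewrite hD aa bb cc ab ac bc mul0r in hG.
move: hG; rewrite !(mul0r, mulr0, mul1r, subr0, addr0, expr0n) /=.
by move/eqP; rewrite eq_sym oner_eq0.
Qed.

Section S.
Variable R : realType.
Lemma conjE (a b : R) : Num.conj (a +i* b) = a -i* b.
Proof. by []. Qed.
Lemma mul00 (A B : 'M[R[i]]_2) : (A *m B) 0 0 = A 0 0 * B 0 0 + A 0 1 * B 1 0.
Proof. have E : lift ord0 (ord0 : 'I_1) = 1 :> 'I_2 by apply: val_inj.
by rewrite !mxE big_ord_recl big_ord1 E. Qed.

Definition Q (p q r s : R) : M2 R :=
  \matrix_(i < 2, j < 2)
    if i == 0 then (if j == 0 then p +i* s else r +i* q)
    else (if j == 0 then (-r) +i* q else p -i* s).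

Lemma Q_unitary p q r s : p^+2 + q^+2 + r^+2 + s^+2 = 1 -> unitaryM2 (Q p q r s).
Proof.
move=> h; rewrite /unitaryM2 /adjM; apply/matrixP => i j.
rewrite !mxE !big_ord_recr big_ord0 /= !mxE.
case: i => [[|[|i]] Hi] //; case: j => [[|[|j]] Hj] //=; rewrite add0r; simpc.
all: apply/eqP; rewrite eq_complex /=; apply/andP; split; apply/eqP; rewrite -?h; ring.
Qed.

End S.

Section T.
Variable R : realType.
Local Notation C := (R[i]).

Lemma Q_lin (p q r s : R) : Q p q r s = p%:C *: Q 1 0 0 0 + q%:C *: Q 0 1 0 0
   + r%:C *: Q 0 0 1 0 + s%:C *: Q 0 0 0 1.
Proof.
apply/matrixP => i j; rewrite !mxE.
case: i => [[|[|i]] Hi] //; case: j => [[|[|j]] Hj] //=; rewrite /real_complex_def; simpc.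
all: apply/eqP; rewrite eq_complex /=; apply/andP; split; apply/eqP; ring.
Qed.

Lemma herm_entries (H : M2 R) : hermM2 H ->
  Num.conj (H 0 0) = H 0 0 /\ Num.conj (H 0 1) = H 1 0 /\ Num.conj (H 1 1) = H 1 1.
Proof.
rewrite /hermM2 /adjM => /matrixP h.
have := h 0 0; have := h 1 0; have := h 1 1; by rewrite !mxE => e11 e10 e00.
Qed.

Definition hx (H : M2 R) := complex.Re (H 0 0).
Definition hu (H : M2 R) := complex.Re (H 0 1).
Definition hv (H : M2 R) := complex.Im (H 0 1).

Lemma tr2 (H : M2 R) : \tr H = H 0 0 + H 1 1.
Proof.
have E : lift ord0 (ord0 : 'I_1) = 1 :> 'I_2 by apply: val_inj.
by rewrite /mxtrace big_ord_recl big_ord1 E.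
Qed.


Lemma anti00 (H K : M2 R) : hermM2 H -> hermM2 K ->
  (H *m K + K *m H) 0 0 = ((2 * (hx H * hx K + hu H * hu K + hv H * hv K)) : R)%:C.
Proof.
move=> /herm_entries [h1 [h2 _]] /herm_entries [k1 [k2 _]].
rewrite /hx /hu /hv mxE !mul00 -h2 -k2.

move: h1 k1; case: (H 0 0) => a b; case: (K 0 0) => c d; case: (H 0 1) => e f;
case: (K 0 1) => g l /= [hb] [hd].
have -> : b = 0 by lra.
have -> : d = 0 by lra.
rewrite /real_complex_def; simpc.
apply/eqP; rewrite eq_complex /=; apply/andP; split; apply/eqP; ring.
Qed.
End T.
Section U.
Variable R : realType.
Lemma sq_expand (a b : R[i]) (H K : M2 R) :
  (a *: H + b *: K) *m (a *: H + b *: K) =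
  (a * a) *: (H *m H) + (b * b) *: (K *m K) + (a * b) *: (H *m K + K *m H).
Proof.
apply/matrixP => i j; rewrite !mxE !big_ord_recl !big_ord0 !mxE; ring.
Qed.

Lemma anti (H K : M2 R) : H *m H = 1%:M -> K *m K = 1%:M ->
  ((3/5 : R)%:C *: H + (4/5 : R)%:C *: K) *m ((3/5 : R)%:C *: H + (4/5 : R)%:C *: K) = 1%:M ->
  H *m K + K *m H = 0.
Proof.
rewrite sq_expand => -> -> E.
have h1 : ((3/5 : R)%:C * (3/5 : R)%:C) *: (1%:M : M2 R) + ((4/5 : R)%:C * (4/5 : R)%:C) *: 1%:M = 1%:M.
  rewrite -scalerDl -[RHS]scale1r; congr (_ *: _).
  rewrite /real_complex_def; simpc; apply/eqP; rewrite eq_complex /=; apply/andP; split; apply/eqP; field; rewrite ?pnatr_eq0 // .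
move: E; rewrite h1 -{2}[1%:M]addr0 => /addrI /eqP; rewrite scaler_eq0 => /orP [|/eqP //].
rewrite /real_complex_def; simpc; rewrite eq_complex /= => /andP [/eqP h _]; exfalso; clear h1; lra.
Qed.

Lemma hu_sq (H : M2 R) : hermM2 H -> unitaryM2 H -> H *m H = 1%:M.
Proof. by rewrite /unitaryM2 => ->. Qed.
End U.
Section V.
Variable R : realType.
Definition dot (H K : M2 R) := hx H * hx K + hu H * hu K + hv H * hv K.

Lemma dot_of (H K : M2 R) : hermM2 H -> hermM2 K -> H *m K + K *m H = 0 -> dot H K = 0.
Proof.
move=> hH hK E; have := anti00 hH hK; rewrite E mxE /dot.
rewrite /real_complex_def => -[] /esym h; lra.
Qed.

Lemma norm_of (H : M2 R) : hermM2 H -> H *m H = 1%:M -> dot H H = 1.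
Proof.
move=> hH E; have := anti00 hH hH; rewrite E !mxE /dot /=.
rewrite /real_complex_def => -[] /esym h; lra.
Qed.
End V.
Lemma c0 (R : realType) : (0 : R)%:C = 0. Proof. by []. Qed.
Lemma c1 (R : realType) : (1 : R)%:C = 1. Proof. by []. Qed.

Unset Implicit Arguments.
Theorem corollary3p6 (R : realType) :
  ~ exists phi : M2 R -> M2 R,
      [/\ real_linear phi,
          (forall A, hermM2 (phi A)) &
          (forall U, unitaryM2 U -> hermM2 (phi U) /\ unitaryM2 (phi U))].
Proof.
case=> phi [[hadd hsc] hh hu].
set H0 := phi (Q 1 0 0 0); set H1 := phi (Q 0 1 0 0);
set H2 := phi (Q 0 0 1 0); set H3 := phi (Q 0 0 0 1).
have G p q r s : phi (Q p q r s) = p%:C *: H0 + q%:C *: H1 + r%:C *: H2 + s%:C *: H3.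
  by rewrite Q_lin !hadd !hsc.
have sq p q r s : p^+2 + q^+2 + r^+2 + s^+2 = 1 -> phi (Q p q r s) *m phi (Q p q r s) = 1%:M.
  move=> e; have [h1 h2] := hu _ (Q_unitary e); exact: hu_sq.
have e1 : (1:R)^+2 + 0^+2 + 0^+2 + 0^+2 = 1 by ring.
have e2 : (0:R)^+2 + 1^+2 + 0^+2 + 0^+2 = 1 by ring.
have e3 : (0:R)^+2 + 0^+2 + 1^+2 + 0^+2 = 1 by ring.
have e4 : (0:R)^+2 + 0^+2 + 0^+2 + 1^+2 = 1 by ring.
have s0 := sq _ _ _ _ e1; have s1 := sq _ _ _ _ e2;
have s2 := sq _ _ _ _ e3; have s3 := sq _ _ _ _ e4.
rewrite -/H0 in s0; rewrite -/H1 in s1; rewrite -/H2 in s2; rewrite -/H3 in s3.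
have f : (3/5:R)^+2 + (4/5)^+2 = 1 by field; rewrite ?pnatr_eq0.
have f01 : (3/5:R)^+2 + (4/5)^+2 + 0^+2 + 0^+2 = 1 by field; rewrite ?pnatr_eq0.
have f02 : (3/5:R)^+2 + 0^+2 + (4/5)^+2 + 0^+2 = 1 by field; rewrite ?pnatr_eq0.
have f03 : (3/5:R)^+2 + 0^+2 + 0^+2 + (4/5)^+2 = 1 by field; rewrite ?pnatr_eq0.
have f12 : (0:R)^+2 + (3/5)^+2 + (4/5)^+2 + 0^+2 = 1 by field; rewrite ?pnatr_eq0.
have f13 : (0:R)^+2 + (3/5)^+2 + 0^+2 + (4/5)^+2 = 1 by field; rewrite ?pnatr_eq0.
have f23 : (0:R)^+2 + 0^+2 + (3/5)^+2 + (4/5)^+2 = 1 by field; rewrite ?pnatr_eq0.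
have a01 := anti s0 s1; have a02 := anti s0 s2; have a03 := anti s0 s3;
have a12 := anti s1 s2; have a13 := anti s1 s3; have a23 := anti s2 s3.
have := sq _ _ _ _ f01; rewrite G c0 !scale0r ?addr0 => /a01 {}a01.
have := sq _ _ _ _ f02; rewrite G c0 !scale0r ?addr0 ?add0r => /a02 {}a02.
have := sq _ _ _ _ f03; rewrite G c0 !scale0r ?addr0 ?add0r => /a03 {}a03.
have := sq _ _ _ _ f12; rewrite G c0 !scale0r ?addr0 ?add0r => /a12 {}a12.
have := sq _ _ _ _ f13; rewrite G c0 !scale0r ?addr0 ?add0r => /a13 {}a13.
have := sq _ _ _ _ f23; rewrite G c0 !scale0r ?addr0 ?add0r => /a23 {}a23.
have hh0 := hh (Q 1 0 0 0); have hh1 := hh (Q 0 1 0 0);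
have hh2 := hh (Q 0 0 1 0); have hh3 := hh (Q 0 0 0 1).
rewrite -/H0 in hh0; rewrite -/H1 in hh1; rewrite -/H2 in hh2; rewrite -/H3 in hh3.
apply: (no4 (norm_of hh0 s0) (norm_of hh1 s1) (norm_of hh2 s2) (norm_of hh3 s3)
  (dot_of hh0 hh1 a01) (dot_of hh0 hh2 a02) (dot_of hh0 hh3 a03)
  (dot_of hh1 hh2 a12) (dot_of hh1 hh3 a13) (dot_of hh2 hh3 a23)).
Qed.
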